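(* Let $\mathcal R(P_n)=u_1,\ldots,u_m$. (1) For $n\geq2$: if $x_n\mid u_i$ for some $i$, then $x_n\mid u_j$ for all $j\geq i$. (2) For $n\geq3$: if $x_{n-2}\mid u_i$ for some $i$, then $x_{n-2}\mid u_j$ for all $j\geq i$. (3) For $n\geq4$: if $\mathcal R(P_{n-2})=v_1,\ldots,v_k$ and $\mathcal R(P_{n-1})=w_1,\ldots,w_\ell$, then $\mathcal R(P_n)=x_{n-1}v_1,\ldots,x_{n-1}v_k,x_nw_1,\ldots,x_nw_\alpha$ for some $\alpha<\ell$.
   Context: For $m\geq 1$, $P_m$ is the path graph on vertices $x_1,\ldots,x_m$ with edges $\{x_i,x_{i+1}\}$. The rooted list $\mathcal R(P_m)$ (a list of the minimal monomial generators of the cover ideal of $P_m$) is defined recursively: $\mathcal R(P_1)$ empty; $\mathcal R(P_2)=x_1,x_2$; $\mathcal R(P_3)=x_2,x_1x_3$; $\mathcal R(P_4)=x_1x_3,x_2x_3,x_2x_4$; for $m\geq5$, if $\mathcal R(P_{m-2})=u_1,\ldots,u_r$ and $\mathcal R(P_{m-3})=v_1,\ldots,v_s$, then $\mathcal R(P_m)=x_{m-1}u_1,\ldots,x_{m-1}u_r,x_mx_{m-2}v_1,\ldots,x_mx_{m-2}v_s$. *)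

(* Defs.v *)
From mathcomp Require Import all_boot.
From mathcomp Require Import finmap multiset.
Set Implicit Arguments. Unset Strict Implicit. Unset Printing Implicit Defensive.
Local Open Scope fset_scope.
Local Open Scope mset_scope.

(* Monomials in the variables x_1, x_2, ... are finite multisets of variable
   indices: the monomial x_1^{a_1} x_2^{a_2} ... is the multiset containing
   i with multiplicity a_i. *)
Definition monomial := {mset nat}.
Definition var (i : nat) : monomial := [mset i].
Definition mmul (u w : monomial) : monomial := u `+` w.
Definition mdvd (u w : monomial) : bool := u `<=` w.

(* The rooted list R(P_m) of the path graph P_m (R(P_0) := [::] by convention,
   P_0 is never used). *)
Fixpoint rooted (m : nat) : seq monomial :=
  match m with
  | 0 | 1 => [::]
  | 2 => [:: var 1; var 2]
  | 3 => [:: var 2; mmul (var 1) (var 3)]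
  | 4 => [:: mmul (var 1) (var 3); mmul (var 2) (var 3); mmul (var 2) (var 4)]
  | ((((k.+2 as k2).+1) as k3).+2) =>
      [seq mmul (var k.+4) u | u <- rooted k3] ++
      [seq mmul (mmul (var k.+4.+1) (var k.+3)) v | v <- rooted k2]
  end.

(* Main.v *)
Require Import Defs.
From mathcomp Require Import all_boot.
From mathcomp Require Import finmap multiset.
From mathcomp Require Import zify.

Lemma mdvdE b (u : monomial) : mdvd (var b) u = (b \in u).
Proof. by rewrite /mdvd /var msub1set. Qed.

Lemma in_mmul a (u w : monomial) : (a \in mmul u w) = (a \in u) || (a \in w).
Proof. by rewrite /mmul in_msetD. Qed.

Lemma in_var a b : (a \in var b) = (a == b).
Proof. by rewrite /var in_mset1. Qed.

Lemma rooted0 : rooted 0 = [::]. Proof. by []. Qed.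
Lemma rooted1 : rooted 1 = [::]. Proof. by []. Qed.
Lemma rooted2 : rooted 2 = [:: var 1; var 2]. Proof. by []. Qed.
Lemma rooted3 : rooted 3 = [:: var 2; mmul (var 1) (var 3)]. Proof. by []. Qed.
Lemma rooted4 : rooted 4 =
  [:: mmul (var 1) (var 3); mmul (var 2) (var 3); mmul (var 2) (var 4)].
Proof. by []. Qed.

Lemma rooted_unfold k : rooted k.+4.+1 =
  [seq mmul (var k.+4) u | u <- rooted k.+3] ++
  [seq mmul (mmul (var k.+4.+1) (var k.+3)) v | v <- rooted k.+2].
Proof. by []. Qed.

Lemma mmulC u w : mmul u w = mmul w u.
Proof. by rewrite /mmul msetDC. Qed.
Lemma mmulA u v w : mmul u (mmul v w) = mmul (mmul u v) w.
Proof. by rewrite /mmul msetDA. Qed.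

Global Opaque rooted mmul var.

Lemma rooted_supp m : forall (u : monomial) (i : nat), u \in rooted m -> i \in u -> i <= m.
Proof.
elim/ltn_ind: m => m IH u i.
case: m IH => [|[|[|[|[|k]]]]] IH.
- by rewrite rooted0.
- by rewrite rooted1.
- rewrite rooted2 => hu; repeat (case/predU1P: hu => [->|hu]); rewrite ?in_mmul ?in_var; lia.
- rewrite rooted3 => hu; repeat (case/predU1P: hu => [->|hu]); rewrite ?in_mmul ?in_var; lia.
- rewrite rooted4 => hu; repeat (case/predU1P: hu => [->|hu]); rewrite ?in_mmul ?in_var; lia.
rewrite rooted_unfold mem_cat => /orP[]/mapP[v hv ->]; rewrite !in_mmul !in_var.
- case/orP => [/eqP->|hi]; first lia. have h : k.+3 < k.+4.+1 by lia.
  have := IH k.+3 h v i hv hi; lia.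
- case/orP => [/orP[]/eqP->|hi]; [lia|lia|]. have h : k.+2 < k.+4.+1 by lia.
  have := IH k.+2 h v i hv hi; lia.
Qed.

Lemma rooted_size m : 2 <= m -> 0 < size (rooted m).
Proof.
elim/ltn_ind: m => m IH.
case: m IH => [|[|[|[|[|k]]]]] IH // _; rewrite ?rooted2 ?rooted3 ?rooted4 //.
rewrite rooted_unfold size_cat !size_map.
have h : k.+2 < k.+4.+1 by lia.
have := IH k.+2 h isT; lia.
Qed.

Definition mono (P : pred monomial) (s : seq monomial) :=
  exists s1 s2, s = s1 ++ s2 /\ all (predC P) s1 /\ all P s2.

Lemma mono_nth P s i j : mono P s -> i <= j -> j < size s ->
  P (nth mset0 s i) -> P (nth mset0 s j).
Proof.
move=> [s1 [s2 [-> [h1 h2]]]] hij hj.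
rewrite size_cat in hj.
case: (ltnP j (size s1)) => hj1.
  have hi1 : i < size s1 by lia.
  rewrite nth_cat hi1 => hP. by have := allP h1 _ (mem_nth mset0 hi1); rewrite /= hP.
move=> _; rewrite nth_cat ltnNge hj1 /=. apply: (allP h2). apply: mem_nth. by rewrite ltn_subLR.
Qed.

Lemma part1 n : 2 <= n -> mono (fun u => n \in u) (rooted n).
Proof.
case: n => [|[|[|[|[|k]]]]] // _.
- rewrite rooted2; exists [:: var 1], [:: var 2].
  by rewrite /= !in_var.
- rewrite rooted3; exists [:: var 2], [:: mmul (var 1) (var 3)].
  by rewrite /= !in_mmul !in_var.
- rewrite rooted4; exists [:: mmul (var 1) (var 3); mmul (var 2) (var 3)], [:: mmul (var 2) (var 4)].
  by rewrite /= !in_mmul !in_var.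
rewrite rooted_unfold.
eexists; eexists; split; first reflexivity.
split; apply/allP => u /mapP[v hv ->] /=; rewrite !in_mmul !in_var ?eqxx //=.
apply/negP => /orP[]; first lia. by move/(rooted_supp _ _ _ hv); lia.
Qed.

Lemma part2 n : 3 <= n -> mono (fun u => (n - 2) \in u) (rooted n).
Proof.
case: n => [|[|[|[|[|k]]]]] // _.
- rewrite rooted3; exists [:: var 2], [:: mmul (var 1) (var 3)].
  by rewrite /= !in_mmul !in_var.
- rewrite rooted4; exists [:: mmul (var 1) (var 3)], [:: mmul (var 2) (var 3); mmul (var 2) (var 4)].
  by rewrite /= !in_mmul !in_var.
have [s1 [s2 [e [h1 h2]]]] := @part1 k.+3 isT.
rewrite rooted_unfold e map_cat -catA. rewrite subn2 /=.
eexists; eexists; split; first reflexivity.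
split.
  apply/allP => u /mapP[v hv ->] /=; rewrite !in_mmul !in_var /=.
  have -> : (k.+3 == k.+4) = false by lia.
  by have := allP h1 v hv.
rewrite all_cat; apply/andP; split; apply/allP => u /mapP[v hv ->] /=;
  rewrite !in_mmul !in_var ?eqxx ?orbT //=.
by move/allP: h2 => /(_ v hv) ->; rewrite orbT.
Qed.


Theorem lemma3p7 :
  (* (1) *)
  (forall n i j : nat, 2 <= n -> i <= j -> j < size (rooted n) ->
     mdvd (var n) (nth mset0 (rooted n) i) ->
     mdvd (var n) (nth mset0 (rooted n) j)) /\
  (* (2) *)
  (forall n i j : nat, 3 <= n -> i <= j -> j < size (rooted n) ->
     mdvd (var (n - 2)) (nth mset0 (rooted n) i) ->
     mdvd (var (n - 2)) (nth mset0 (rooted n) j)) /\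
  (* (3) *)
  (forall n : nat, 4 <= n ->
     exists alpha : nat, alpha < size (rooted n.-1) /\
       rooted n = [seq mmul (var n.-1) v | v <- rooted (n - 2)] ++
                  [seq mmul (var n) w | w <- take alpha (rooted n.-1)]).
Proof.
split; [|split].
- move=> n i j hn hij hj; rewrite !mdvdE. exact: (@mono_nth (fun u => n \in u) _ i j (part1 n hn) hij hj).
- move=> n i j hn hij hj; rewrite !mdvdE. exact: (@mono_nth (fun u => (n - 2) \in u) _ i j (part2 n hn) hij hj).
case=> [|[|[|[|[|k]]]]] // _; rewrite subn2 /=.
- exists 1; rewrite rooted4 rooted3 rooted2; split => //=.
  by rewrite !(mmulC (var 3)) (mmulC (var 4)).
case: k => [|k].
  exists 2; rewrite (rooted_unfold 0) rooted4 rooted3 rooted2; split => //=.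
  by rewrite -!mmulA (mmulC (var 3) (var 1)) (mmulC (var 3) (var 2)).
exists (size (rooted k.+3)).
rewrite (rooted_unfold k.+1) (rooted_unfold k).
split.
  rewrite size_cat !size_map. have := @rooted_size k.+2 isT. lia.
rewrite take_size_cat ?size_map // -map_comp.
congr (_ ++ _); apply: eq_map => v /=. by rewrite mmulA.
Qed.
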